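(* Let $\{u_n\}_{n\in\mathbb{N}}$ be a Hamel basis of a vector space $E$ and $\{f_n\}_{n\in\mathbb{N}}$ a linearly independent sequence of linear functionals on $E$ separating the points of $E$. Then there exist bijections $\alpha,\beta:\mathbb{N}\to\mathbb{N}$ such that for every $n\in\mathbb{N}$ the matrix $\{f_{\alpha(j)}(u_{\beta(k)})\}_{1\le j,k\le n}$ is invertible. Furthermore, there exist scalars $c_{j,k}\in\mathbb{K}$ for $j\le k$ such that $c_{j,j}\neq0$ for all $j$, and, setting $v_k=\sum_{m=1}^k c_{m,k}u_{\beta(m)}$, one has $f_{\alpha(j)}(v_j)=1$ for all $j\in\mathbb{N}$ and $f_{\alpha(j)}(v_k)=0$ for all $j,k\in\mathbb{N}$ with $j<k$.
   Context: Vector spaces are over $\mathbb{K}\in\{\mathbb{R},\mathbb{C}\}$. *)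

(* Defs.v *)
From HB Require Import structures.
From mathcomp Require Import all_boot all_order all_algebra.
Set Implicit Arguments. Unset Strict Implicit. Unset Printing Implicit Defensive.
Import Order.TTheory GRing.Theory Num.Theory.
Local Open Scope ring_scope.

Definition linear_functional (K : fieldType) (E : lmodType K) (f : E -> K) : Prop :=
  forall (a : K) (x y : E), f (a *: x + y) = a * f x + f y.

Definition hamel_basis (K : fieldType) (E : lmodType K) (u : nat -> E) : Prop :=
  (forall (n : nat) (c : nat -> K),
      \sum_(i < n) c i *: u i = 0 -> forall i : nat, (i < n)%N -> c i = 0)
  /\ (forall x : E, exists (n : nat) (c : nat -> K), x = \sum_(i < n) c i *: u i).

Definition lin_indep_functionals (K : fieldType) (E : lmodType K)
    (f : nat -> E -> K) : Prop :=
  forall (n : nat) (c : nat -> K),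
    (forall x : E, \sum_(i < n) c i * f i x = 0) ->
    forall i : nat, (i < n)%N -> c i = 0.

Definition separates_points (K : fieldType) (E : lmodType K)
    (f : nat -> E -> K) : Prop :=
  forall x y : E, x <> y -> exists n : nat, f n x <> f n y.

(* Main.v *)
Require Import Defs.
From HB Require Import structures.
From mathcomp Require Import all_boot all_order all_algebra.
From Stdlib Require Import Classical ClassicalEpsilon.
Import Order.TTheory GRing.Theory Num.Theory.
Local Open Scope ring_scope.

Section MX.
Variable K : fieldType.

Lemma ker_unit n (A : 'M[K]_n) :
  (forall x : 'rV_n, x *m A = 0 -> x = 0) -> A \in unitmx.
Proof.
move=> H; rewrite -row_free_unit -kermx_eq0; apply/eqP/row_matrixP => i.
rewrite row0; apply: H; apply/sub_kermxP; exact: row_sub.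
Qed.

Lemma ker_unitc n (A : 'M[K]_n) :
  (forall d : 'cV_n, A *m d = 0 -> d = 0) -> A \in unitmx.
Proof.
move=> H; rewrite -unitmx_tr; apply: ker_unit => x Hx.
have : A *m x^T = 0 by rewrite -(trmxK (A *m x^T)) trmx_mul trmxK Hx trmx0.
by move/H => /(congr1 trmx); rewrite trmxK trmx0.
Qed.

Lemma unit_ker n (A : 'M[K]_n) (x : 'rV_n) : A \in unitmx -> x *m A = 0 -> x = 0.
Proof. by move=> HA Hx; rewrite -(mulmxK HA x) Hx mul0mx. Qed.

Lemma unit_kerc n (A : 'M[K]_n) (d : 'cV_n) : A \in unitmx -> A *m d = 0 -> d = 0.
Proof. by move=> HA Hx; rewrite -(mulKmx HA d) Hx mulmx0. Qed.
End MX.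

Lemma reidx (V : nmodType) n N (s : 'I_n -> nat) (T : 'I_n -> nat -> V) :
  (forall k, (s k < N)%N) ->
  \sum_(k < n) T k (s k) = \sum_(i < N) \sum_(k < n | s k == i) T k i.
Proof.
move=> HN; under [RHS]eq_bigr do rewrite big_mkcond.
rewrite [RHS]exchange_big /=; apply: eq_bigr => k _.
rewrite -big_mkcond /= (big_pred1 (Ordinal (HN k))) //=.
Qed.


Lemma coef_uniq (K : nmodType) (s : seq nat) (d : nat -> K) k0 :
  uniq s -> (k0 < size s)%N ->
  \sum_(k < size s | nth 0%N s k == nth 0%N s k0) d k = d k0.
Proof.
move=> Us Hk; rewrite (big_pred1 (Ordinal Hk)) //= => k.
rewrite nth_uniq //; apply/eqP/eqP => [/eqP H|->//]; exact: val_inj.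
Qed.

Lemma max_bound (s : seq nat) (k : 'I_(size s)) :
  (nth 0%N s k < (\big[maxn/0%N]_(k < size s) nth 0%N s k).+1)%N.
Proof. by rewrite ltnS (bigD1 k) //= leq_maxl. Qed.

Section LF.
Variables (K : fieldType) (E : lmodType K).
Implicit Types h : E -> K.

Lemma lf0 h : linear_functional h -> h 0 = 0.
Proof.
move=> hL; have := hL 1 0 0; rewrite scale1r addr0 mul1r => H.
have := congr1 (fun t => t - h 0) H; rewrite addrK subrr; by move/esym.
Qed.

Lemma lfD h x y : linear_functional h -> h (x + y) = h x + h y.
Proof. by move=> hL; have := hL 1 x y; rewrite scale1r mul1r. Qed.

Lemma lfZ h a x : linear_functional h -> h (a *: x) = a * h x.
Proof. by move=> hL; rewrite -(addr0 (a *: x)) hL lf0 // addr0. Qed.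

Lemma lfN h x : linear_functional h -> h (- x) = - h x.
Proof. by move=> hL; rewrite -scaleN1r lfZ // mulN1r. Qed.

Lemma lfB h x y : linear_functional h -> h (x - y) = h x - h y.
Proof. by move=> hL; rewrite lfD // lfN. Qed.

Lemma lfsum h (I : finType) (P : pred I) (F : I -> E) : linear_functional h ->
  h (\sum_(i | P i) F i) = \sum_(i | P i) h (F i).
Proof. move=> hL; elim/big_rec2: _ => [|i y1 y2 _ <-]; [exact: lf0 | exact: lfD]. Qed.

Lemma lf_add h1 h2 : linear_functional h1 -> linear_functional h2 ->
  linear_functional (fun x => h1 x + h2 x).
Proof. by move=> L1 L2 c x y; rewrite L1 L2 mulrDr addrACA. Qed.

Lemma lf_comb (I : finType) (c : I -> K) (hs : I -> E -> K) :
  (forall i, linear_functional (hs i)) ->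
  linear_functional (fun x => \sum_i c i * hs i x).
Proof.
move=> L a x y; rewrite mulr_sumr -big_split /=; apply: eq_bigr => i _.
by rewrite L mulrDr mulrCA.
Qed.

Lemma lf_scale a h : linear_functional h -> linear_functional (fun x => a * h x).
Proof. by move=> L c x y; rewrite L mulrDr mulrCA. Qed.
End LF.

Section Lin.
Variables (K : fieldType) (E : lmodType K) (u : nat -> E) (f : nat -> E -> K).
Hypothesis hf : forall n : nat, linear_functional (f n).
Hypothesis hu : hamel_basis u.
Hypothesis hind : lin_indep_functionals f.

Lemma f0 n : f n 0 = 0.
Proof. exact: lf0. Qed.
Lemma fD n x y : f n (x + y) = f n x + f n y.
Proof. exact: lfD. Qed.
Lemma fZ n a x : f n (a *: x) = a * f n x.
Proof. exact: lfZ. Qed.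
Lemma fsum n (I : finType) (P : pred I) (F : I -> E) :
  f n (\sum_(i | P i) F i) = \sum_(i | P i) f n (F i).
Proof. exact: lfsum. Qed.

Lemma indep_u (s : seq nat) (d : nat -> K) :
  uniq s -> \sum_(k < size s) d k *: u (nth 0%N s k) = 0 ->
  forall k, (k < size s)%N -> d k = 0.
Proof.
move=> Us H k0 Hk0.
set N := (\big[maxn/0%N]_(k < size s) nth 0%N s k).+1.
rewrite (@reidx _ _ N _ (fun k i => d k *: u i)) in H; last by move=> k; exact: max_bound.
rewrite (eq_bigr (fun i : 'I_N => (\sum_(k < size s | nth 0%N s k == i) d k) *: u i)) in H;
  last by move=> i _; rewrite scaler_suml.
have := hu.1 N (fun i => \sum_(k < size s | nth 0%N s k == i) d k) H (nth 0%N s k0).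
rewrite coef_uniq //; apply; exact: (@max_bound s (Ordinal Hk0)).
Qed.

Lemma indep_f (s : seq nat) (d : nat -> K) :
  uniq s -> (forall x, \sum_(k < size s) d k * f (nth 0%N s k) x = 0) ->
  forall k, (k < size s)%N -> d k = 0.
Proof.
move=> Us H k0 Hk0.
set N := (\big[maxn/0%N]_(k < size s) nth 0%N s k).+1.
have H' : forall x, \sum_(i < N) (\sum_(k < size s | nth 0%N s k == i) d k) * f i x = 0.
  move=> x; rewrite -[RHS](H x) (@reidx _ _ N _ (fun k i => d k * f i x)); last by move=> k; exact: max_bound.
  by apply: eq_bigr => i _; rewrite mulr_suml.
have := hind N (fun i => \sum_(k < size s | nth 0%N s k == i) d k) H' (nth 0%N s k0).
rewrite coef_uniq //; apply; exact: (@max_bound s (Ordinal Hk0)).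
Qed.
End Lin.


Section Mat.
Variables (K : fieldType) (E : lmodType K) (u : nat -> E) (f : nat -> E -> K).
Hypothesis hf : forall n : nat, linear_functional (f n).
Hypothesis hu : hamel_basis u.
Hypothesis hind : lin_indep_functionals f.
Hypothesis hsep : separates_points f.

Let fD n x y : f n (x + y) = f n x + f n y := @fD _ _ f hf n x y.
Let fZ n a x : f n (a *: x) = a * f n x := @fZ _ _ f hf n a x.
Let fsum n (I : finType) (P : pred I) (F : I -> E) :
  f n (\sum_(i | P i) F i) = \sum_(i | P i) f n (F i) := @fsum _ _ f hf n I P F.
Let fB n x y : f n (x - y) = f n x - f n y := @lfB _ _ (f n) x y (hf n).
Let f0 n : f n 0 = 0 := @f0 _ _ f hf n.

Definition Mat (sa sb : seq nat) n : 'M[K]_n :=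
  \matrix_(j < n, k < n) f (nth 0%N sa j) (u (nth 0%N sb k)).

Definition tonat n (v : 'I_n -> K) (j : nat) : K := \sum_(i < n | val i == j) v i.

Arguments tonat {n}.
Lemma tonatE n (v : 'I_n -> K) (i : 'I_n) : tonat v i = v i.
Proof. by rewrite /tonat (big_pred1 i) // => i'; rewrite val_eqE. Qed.

Lemma solve_row n (A : 'M[K]_n) (r : 'I_n -> K) : A \in unitmx ->
  exists lam : 'I_n -> K, forall k, \sum_j lam j * A j k = r k.
Proof.
move=> HA; exists (fun j => ((\row_k r k) *m invmx A) 0 j) => k.
have := congr1 (fun M : 'rV_n => M 0 k) (mulmxKV HA (\row_k r k)).
by rewrite [in LHS]mxE mxE.
Qed.

Lemma solve_col n (A : 'M[K]_n) (r : 'I_n -> K) : A \in unitmx ->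
  exists mu : 'I_n -> K, forall j, \sum_k A j k * mu k = r j.
Proof.
move=> HA; exists (fun k => (invmx A *m (\col_j r j)) k 0) => j.
have := congr1 (fun M : 'cV_n => M j 0) (mulKVmx HA (\col_j r j)).
by rewrite [in LHS]mxE mxE.
Qed.

Lemma sum_rcons (V : nmodType) (s : seq nat) (x : nat) (F : nat -> nat -> V) :
  \sum_(k < size (rcons s x)) F k (nth 0%N (rcons s x) k) =
  \sum_(k < size s) F k (nth 0%N s k) + F (size s) x.
Proof.
rewrite -(big_mkord xpredT (fun k => F k (nth 0%N (rcons s x) k))).
rewrite size_rcons big_nat_recr //= nth_rcons ltnn eqxx big_mkord.
congr (_ + _); apply: eq_bigr => k _; by rewrite nth_rcons ltn_ord.
Qed.


Lemma ext_fun sa sb a : size sb = size sa -> uniq sa ->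
  Mat sa sb (size sa) \in unitmx -> a \notin sa ->
  exists b, b \notin sb /\ Mat (rcons sa a) (rcons sb b) (size sa).+1 \in unitmx.
Proof.
set n := size sa => Hsb Usa HA Ha.
have [lam Hlam] := @solve_row _ _ (fun k => f a (u (nth 0%N sb k))) HA.
pose g x := f a x + \sum_(j < n) (- lam j) * f (nth 0%N sa j) x.
have gL : linear_functional g.
  apply: lf_add => //; apply: lf_comb => j; exact: hf.
have gsb : forall k : 'I_n, g (u (nth 0%N sb k)) = 0.
  move=> k; rewrite /g -(Hlam k) -big_split; apply: big1 => j _ /=.
  by rewrite mxE mulNr addrN.
have [b Hb] : exists b, g (u b) != 0.
  apply: NNPP => Hn.
  have g0 : forall x, g x = 0.
    move=> x; have [N [e ->]] := hu.2 x.
    rewrite lfsum //; apply: big1 => i _; rewrite lfZ //.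
    have /eqP -> : g (u i) == 0 by apply/negPn/negP => Hi; apply: Hn; exists i.
    by rewrite mulr0.
  have := @indep_f _ _ f hind (rcons sa a)
    (fun j => if (j < n)%N then - tonat lam j else 1).
  move=> /(_ _ _ n) H.
  have : (1 : K) = 0.
    have := H _ _ ; rewrite ltnn; apply.
    - by rewrite rcons_uniq Ha.
    - move=> x; rewrite -[RHS](g0 x) (@sum_rcons _ sa a (fun k y => (if (k < n)%N then - tonat lam k else 1) * f y x)) ltnn mul1r addrC /g; congr (_ + _).
      by apply: eq_bigr => j _; rewrite ltn_ord tonatE.
    - by rewrite size_rcons.
  by move/eqP; rewrite oner_eq0.
exists b; split.
  apply/negP => /(nthP 0%N) [k Hk Hkb]; rewrite Hsb in Hk.
  by move: Hb; rewrite -Hkb (gsb (Ordinal Hk)) eqxx.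
apply: ker_unitc => d Hd.
pose d' (k : 'I_n) : K := d (widen_ord (leqnSn n) k) 0.
pose dn : K := d ord_max 0.
pose W := \sum_(k < n) d' k *: u (nth 0%N sb k) + dn *: u b.
have rowW : forall j : 'I_n.+1, f (nth 0%N (rcons sa a) j) W = 0.
  move=> j; have := congr1 (fun M : 'cV[K]_n.+1 => M j 0) Hd; rewrite !mxE big_ord_recr /=.
  rewrite /W fD fsum fZ mxE.
  have -> : nth 0%N (rcons sb b) (@ord_max n) = b by rewrite nth_rcons Hsb /= ltnn eqxx.
  move=> H; rewrite -[RHS]H; congr (_ + _); last by rewrite mulrC.
  apply: eq_bigr => k _; rewrite mxE fZ mulrC /= (nth_rcons _ sb) Hsb ltn_ord.
  done.
have fWa : f a W = 0 by have := rowW ord_max; rewrite /= nth_rcons ltnn eqxx.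
have fWs : forall j : 'I_n, f (nth 0%N sa j) W = 0.
  by move=> j; have := rowW (widen_ord (leqnSn n) j); rewrite /= nth_rcons ltn_ord.
have gW : g W = 0 by rewrite /g fWa add0r big1 // => j _; rewrite fWs mulr0.
have dn0 : dn = 0.
  move: gW; rewrite /W lfD // lfsum // big1 ?add0r; last by move=> k _; rewrite lfZ // gsb mulr0.
  by rewrite lfZ // => /eqP; rewrite mulf_eq0 (negbTE Hb) orbF => /eqP.
have d'0 : forall k, d' k = 0.
  have : Mat sa sb n *m (\col_k d' k) = 0.
    apply/matrixP => j i; rewrite !mxE (ord1 i) -[RHS](fWs j) /W dn0 scale0r addr0 fsum.
    by apply: eq_bigr => k _; rewrite !mxE fZ mulrC.
  move/(@unit_kerc _ _ _ _ HA) => H k; have := congr1 (fun M : 'cV[K]_n => M k 0) H.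
  by rewrite !mxE.
apply/matrixP => i j; rewrite (ord1 j) mxE.
case: (ltnP i n) => Hi.
  have -> : i = widen_ord (leqnSn n) (Ordinal Hi) by apply: val_inj.
  exact: d'0.
have -> : i = ord_max by apply: val_inj => /=; apply/eqP; rewrite eqn_leq Hi -ltnS ltn_ord.
exact: dn0.
Qed.

Lemma ext_vec sa sb b : size sb = size sa -> uniq sb ->
  Mat sa sb (size sa) \in unitmx -> b \notin sb ->
  exists a, a \notin sa /\ Mat (rcons sa a) (rcons sb b) (size sa).+1 \in unitmx.
Proof.
set n := size sa => Hsb Usb HA Hb.
have [mu Hmu] := @solve_col _ _ (fun j => f (nth 0%N sa j) (u b)) HA.
pose w0 := u b + \sum_(k < n) (- mu k) *: u (nth 0%N sb k).
have fw0 : forall j : 'I_n, f (nth 0%N sa j) w0 = 0.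
  move=> j; rewrite /w0 fD fsum -(Hmu j) -big_split; apply: big1 => k _ /=.
  by rewrite fZ mxE mulNr mulrC addrN.
have w0nz : w0 != 0.
  apply/eqP => H0.
  have := @indep_u _ _ u hu (rcons sb b) (fun k => if (k < n)%N then - tonat mu k else 1).
  move=> /(_ _ _ n) H.
  have : (1 : K) = 0.
    have := H _ _; rewrite ltnn; apply.
    - by rewrite rcons_uniq Hb.
    - rewrite (@sum_rcons _ sb b (fun k y => (if (k < n)%N then - tonat mu k else 1) *: u y)).
      rewrite Hsb ltnn scale1r -[RHS]H0 /w0 addrC; congr (_ + _).
      by apply: eq_bigr => k _; rewrite ltn_ord tonatE.
    - by rewrite size_rcons Hsb.
  by move/eqP; rewrite oner_eq0.
have [a Ha] : exists a, f a w0 != 0.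
  have /hsep [a Ha] : w0 <> 0 by apply/eqP.
  by exists a; apply/eqP; rewrite -(f0 a).
exists a; split.
  apply/negP => /(nthP 0%N) [j Hj Hja].
  by move: Ha; rewrite -Hja (fw0 (Ordinal Hj)) eqxx.
apply: ker_unit => x Hx.
pose x' (j : 'I_n) : K := x 0 (widen_ord (leqnSn n) j).
pose xn : K := x 0 ord_max.
pose h y := \sum_(j < n) x' j * f (nth 0%N sa j) y + xn * f a y.
have hL : linear_functional h.
  by apply: lf_add; [apply: lf_comb => j; exact: hf | apply: lf_scale].
have colH : forall k : 'I_n.+1, h (u (nth 0%N (rcons sb b) k)) = 0.
  move=> k; have := congr1 (fun M : 'rV[K]_n.+1 => M 0 k) Hx; rewrite !mxE big_ord_recr /=.
  rewrite mxE.
  have -> : nth 0%N (rcons sa a) (@ord_max n) = a by rewrite nth_rcons /= ltnn eqxx.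
  move=> H; rewrite -[RHS]H /h; congr (_ + _).
  by apply: eq_bigr => j _; rewrite mxE /= (nth_rcons _ sa) ltn_ord.
have hw0 : h w0 = 0.
  rewrite /w0 lfD // lfsum //.
  have := colH ord_max; rewrite (nth_rcons _ sb) Hsb ltnn eqxx => ->.
  rewrite add0r big1 // => k _; rewrite lfZ //.
  have := colH (widen_ord (leqnSn n) k); rewrite /= (nth_rcons _ sb) Hsb ltn_ord => ->.
  by rewrite mulr0.
have xn0 : xn = 0.
  move: hw0; rewrite /h big1 ?add0r; last by move=> j _; rewrite fw0 mulr0.
  by move/eqP; rewrite mulf_eq0 (negbTE Ha) orbF => /eqP.
have x'0 : forall j, x' j = 0.
  have : (\row_j x' j) *m Mat sa sb n = 0.
    apply/matrixP => i k; rewrite (ord1 i) !mxE.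
    have := colH (widen_ord (leqnSn n) k).
    rewrite /= (nth_rcons _ sb) Hsb ltn_ord /h xn0 mul0r addr0 => H.
    by rewrite -[RHS]H; apply: eq_bigr => j _; rewrite !mxE.
  move/(@unit_ker _ _ _ _ HA) => H j; have := congr1 (fun M : 'rV[K]_n => M 0 j) H.
  by rewrite !mxE.
apply/matrixP => i j; rewrite (ord1 i) mxE.
case: (ltnP j n) => Hj.
  have -> : j = widen_ord (leqnSn n) (Ordinal Hj) by apply: val_inj.
  exact: x'0.
have -> : j = ord_max by apply: val_inj => /=; apply/eqP; rewrite eqn_leq Hj -ltnS ltn_ord.
exact: xn0.
Qed.

End Mat.


Lemma mem_sumn (s : seq nat) x : x \in s -> (x <= sumn s)%N.
Proof.
elim: s => //= y s IH; rewrite in_cons => /orP[/eqP->|/IH H]; first exact: leq_addr.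
exact: leq_trans H (leq_addl _ _).
Qed.

Lemma notin_ex (s : seq nat) : exists a, a \notin s.
Proof. by exists (sumn s).+1; apply/negP => /mem_sumn; rewrite ltnn. Qed.

Lemma bij_nat (g : nat -> nat) : injective g -> (forall y, exists x, g x = y) -> bijective g.
Proof.
move=> Hi Hs.
have Hs' : forall y, exists x, g x == y by move=> y; have [x Hx] := Hs y; exists x; apply/eqP.
exists (fun y => ex_minn (Hs' y)) => [x|y].
  by case: ex_minnP => m /eqP /Hi.
by case: ex_minnP => m /eqP.
Qed.

Section Constr.
Variables (K : fieldType) (E : lmodType K) (u : nat -> E) (f : nat -> E -> K).
Hypothesis hf : forall n : nat, linear_functional (f n).
Hypothesis hu : hamel_basis u.
Hypothesis hind : lin_indep_functionals f.
Hypothesis hsep : separates_points f.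

Local Notation M := (@Mat K E u f).

Definition stepf (st : seq nat * seq nat) :=
  let a := ex_minn (notin_ex st.1) in
  (rcons st.1 a, rcons st.2 (epsilon (inhabits 0%N) (fun b => b \notin st.2 /\
      M (rcons st.1 a) (rcons st.2 b) (size st.1).+1 \in unitmx))).

Definition stepv (st : seq nat * seq nat) :=
  let b := ex_minn (notin_ex st.2) in
  (rcons st.1 (epsilon (inhabits 0%N) (fun a => a \notin st.1 /\
      M (rcons st.1 a) (rcons st.2 b) (size st.1).+1 \in unitmx)), rcons st.2 b).

Fixpoint state n := match n with
  | 0 => ([::], [::])
  | m.+1 => if odd m then stepv (state m) else stepf (state m) end.

Definition Inv n (st : seq nat * seq nat) :=
  [/\ size st.1 = n, size st.2 = n, uniq st.1, uniq st.2 & M st.1 st.2 n \in unitmx].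

Lemma inv_state n : Inv n (state n).
Proof.
elim: n => [|n IH].
  split=> //; apply: ker_unit => x _; by apply/matrixP => i [] [].
case: IH => H1 H2 U1 U2 HM.
rewrite /=; case: (odd n).
- rewrite /stepv /=; set b := ex_minn _.
  have Hb : b \notin (state n).2 by rewrite /b; case: ex_minnP.
  have HM' : M (state n).1 (state n).2 (size (state n).1) \in unitmx by rewrite H1.
  have := @ext_vec K E u f hf hu hsep (state n).1 (state n).2 b.
  case/(_ _ _ HM' Hb) => //; first by rewrite H1 H2.
  move=> a0 Ha0.
  set a := epsilon _ _.
  have [Ha HMa] : a \notin (state n).1 /\ M (rcons (state n).1 a) (rcons (state n).2 b) (size (state n).1).+1 \in unitmx.
    by rewrite /a; apply: (epsilon_spec (inhabits 0%N) (fun a => a \notin (state n).1 /\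
      M (rcons (state n).1 a) (rcons (state n).2 b) (size (state n).1).+1 \in unitmx)); exists a0.
  by split => /=; rewrite ?size_rcons ?H1 ?H2 ?rcons_uniq ?Ha ?Hb ?U1 ?U2 //; move: HMa; rewrite H1.
- rewrite /stepf /=; set a := ex_minn _.
  have Ha : a \notin (state n).1 by rewrite /a; case: ex_minnP.
  have HM' : M (state n).1 (state n).2 (size (state n).1) \in unitmx by rewrite H1.
  have := @ext_fun K E u f hf hu hind (state n).1 (state n).2 a.
  case/(_ _ _ HM' Ha) => //; first by rewrite H1 H2.
  move=> b0 Hb0.
  set b := epsilon _ _.
  have [Hb HMb] : b \notin (state n).2 /\ M (rcons (state n).1 a) (rcons (state n).2 b) (size (state n).1).+1 \in unitmx.
    by rewrite /b; apply: (epsilon_spec (inhabits 0%N) (fun b => b \notin (state n).2 /\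
      M (rcons (state n).1 a) (rcons (state n).2 b) (size (state n).1).+1 \in unitmx)); exists b0.
  by split => /=; rewrite ?size_rcons ?H1 ?H2 ?rcons_uniq ?Ha ?Hb ?U1 ?U2 //; move: HMb; rewrite H1.
Qed.

Lemma state_SS n : state n.+1 = if odd n then stepv (state n) else stepf (state n).
Proof. by []. Qed.
Lemma stepv2 st : (stepv st).2 = rcons st.2 (ex_minn (notin_ex st.2)).
Proof. by []. Qed.

Lemma state_S n : exists x y, state n.+1 = (rcons (state n).1 x, rcons (state n).2 y).
Proof. by rewrite /=; case: (odd n); [rewrite /stepv | rewrite /stepf]; eexists; eexists. Qed.

Lemma prefix m i : (i < m)%N ->
  nth 0%N (state m).1 i = nth 0%N (state i.+1).1 i /\
  nth 0%N (state m).2 i = nth 0%N (state i.+1).2 i.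
Proof.
elim: m => // m IH; rewrite ltnS leq_eqVlt => /orP[/eqP->//|Hi].
have [x [y ->]] := state_S m; case: (inv_state m) => H1 H2 _ _ _.
by rewrite /= !nth_rcons H1 H2 Hi; exact: IH.
Qed.

Definition alpha i := nth 0%N (state i.+1).1 i.
Definition beta i := nth 0%N (state i.+1).2 i.

Lemma MatS n (j k : 'I_n) : M (state n).1 (state n).2 n j k = f (alpha j) (u (beta k)).
Proof.
by rewrite mxE; have [-> _] := @prefix _ _ (ltn_ord j); have [_ ->] := @prefix _ _ (ltn_ord k).
Qed.

Lemma mem_mono m p x : (m <= p)%N ->
  (x \in (state m).1 -> x \in (state p).1) /\ (x \in (state m).2 -> x \in (state p).2).
Proof.
elim: p => [|p IH]; first by rewrite leqn0 => /eqP->.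
rewrite leq_eqVlt => /orP[/eqP->//|]; rewrite ltnS => /IH [H1 H2].
have [a [b ->]] := state_S p.
by split => /= Hx; rewrite mem_rcons in_cons ?H1 ?H2 ?orbT.
Qed.

Lemma surj1 k a : (a < k)%N -> a \in (state k.*2).1.
Proof.
elim: k a => // k IH a; rewrite ltnS leq_eqVlt => /orP[/eqP->|Ha]; last first.
  apply: (proj1 (@mem_mono k.*2 _ a _)); [by rewrite leq_double | exact: IH].
rewrite doubleS; apply: (proj1 (@mem_mono (k.*2).+1 _ k _)) => //.
rewrite /= odd_double /stepf /= mem_rcons in_cons.
case: ex_minnP => a0 Ha0 Hmin.
case Hk: (k \in (state k.*2).1); first by rewrite orbT.
rewrite orbF eqn_leq Hmin ?Hk // andbT leqNgt; apply/negP => H.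
by move: Ha0; rewrite IH.
Qed.

Lemma surj2 k b : (b < k)%N -> b \in (state k.*2).2.
Proof.
elim: k b => // k IH b; rewrite ltnS leq_eqVlt => /orP[/eqP->|Hb]; last first.
  apply: (proj2 (@mem_mono k.*2 _ b _)); [by rewrite leq_double | exact: IH].
have -> : state (k.+1).*2 = stepv (state (k.*2).+1) by rewrite doubleS state_SS oddS odd_double.
rewrite stepv2 mem_rcons in_cons.
case: ex_minnP => b0 Hb0 Hmin.
case Hk: (k \in (state (k.*2).+1).2); first by rewrite orbT.
rewrite orbF eqn_leq Hmin ?Hk // andbT leqNgt; apply/negP => H.
move: Hb0; rewrite (proj2 (@mem_mono k.*2 _ b0 _)) //; exact: IH.
Qed.

Lemma alpha_bij : bijective alpha.
Proof.
apply: bij_nat.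
  move=> i i' H; set m := (maxn i i').+1.
  have Hi : (i < m)%N by rewrite ltnS leq_maxl.
  have Hi' : (i' < m)%N by rewrite ltnS leq_maxr.
  have [Ha _] := @prefix _ _ Hi; have [Ha' _] := @prefix _ _ Hi'.
  case: (inv_state m) => H1 _ U1 _ _.
  by apply/eqP; rewrite -(nth_uniq 0%N _ _ U1) ?H1 // Ha Ha'; apply/eqP.
move=> a; have /(nthP 0%N) [i Hi Hia] := @surj1 _ _ (ltnSn a).
case: (inv_state (a.+1).*2) => H1 _ _ _ _; rewrite H1 in Hi.
by exists i; rewrite /alpha -(proj1 (@prefix _ _ Hi)).
Qed.

Lemma beta_bij : bijective beta.
Proof.
apply: bij_nat.
  move=> i i' H; set m := (maxn i i').+1.
  have Hi : (i < m)%N by rewrite ltnS leq_maxl.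
  have Hi' : (i' < m)%N by rewrite ltnS leq_maxr.
  have [_ Ha] := @prefix _ _ Hi; have [_ Ha'] := @prefix _ _ Hi'.
  case: (inv_state m) => _ H2 _ U2 _.
  by apply/eqP; rewrite -(nth_uniq 0%N _ _ U2) ?H2 // Ha Ha'; apply/eqP.
move=> a; have /(nthP 0%N) [i Hi Hia] := @surj2 _ _ (ltnSn a).
case: (inv_state (a.+1).*2) => _ H2 _ _ _; rewrite H2 in Hi.
by exists i; rewrite /beta -(proj2 (@prefix _ _ Hi)).
Qed.

Arguments state : simpl never.

Definition ek k : 'cV[K]_k.+1 := \col_j (if val j == k then 1 else 0).
Definition vk k : 'cV[K]_k.+1 := invmx (M (state k.+1).1 (state k.+1).2 k.+1) *m ek k.
Definition cc (m k : nat) : K := @tonat K _ (fun i : 'I_k.+1 => vk k i 0) m.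

Lemma Avk k : M (state k.+1).1 (state k.+1).2 k.+1 *m vk k = ek k.
Proof. by rewrite /vk mulKVmx //; case: (inv_state k.+1). Qed.

Lemma key k j : (j <= k)%N ->
  f (alpha j) (\sum_(m < k.+1) cc m k *: u (beta m)) = if j == k then 1 else 0.
Proof.
move=> Hj; have Hj' : (j < k.+1)%N by [].
have := congr1 (fun A : 'cV[K]_k.+1 => A (Ordinal Hj') 0) (Avk k).
rewrite [in LHS]mxE mxE /= => <-.
rewrite (@fsum _ _ f hf); apply: eq_bigr => m _.
by rewrite (@fZ _ _ f hf) MatS /cc tonatE mulrC.
Qed.

Lemma ckk k : cc k k != 0.
Proof.
apply/negP => /eqP H0.
have vl : vk k ord_max 0 = 0.
  have := @tonatE _ _ (fun i : 'I_k.+1 => vk k i 0) ord_max; rewrite /= => <-; exact: H0.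
have v'0 : (\col_(m < k) vk k (widen_ord (leqnSn k) m) 0) = 0.
  apply: (@unit_kerc _ _ (M (state k).1 (state k).2 k)); first by case: (inv_state k).
  apply/matrixP => j i; rewrite (ord1 i) [LHS]mxE [RHS]mxE.
  have := congr1 (fun A : 'cV[K]_k.+1 => A (widen_ord (leqnSn k) j) 0) (Avk k).
  have Hne : (widen_ord (leqnSn k) j == k :> nat) = false by rewrite /= ltn_eqF.
  rewrite [LHS]mxE [RHS]mxE Hne big_ord_recr /= vl mulr0 addr0 => H; rewrite -[RHS]H.
  by apply: eq_bigr => m _; rewrite mxE !MatS.
have : vk k = 0.
  apply/matrixP => i j; rewrite (ord1 j) [RHS]mxE.
  case: (ltnP i k) => Hi.
    have -> : i = widen_ord (leqnSn k) (Ordinal Hi) by apply: val_inj.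
    by have := congr1 (fun A : 'cV[K]_k => A (Ordinal Hi) 0) v'0; rewrite mxE [RHS]mxE.
  have -> : i = ord_max by apply: val_inj => /=; apply/eqP; rewrite eqn_leq Hi -ltnS ltn_ord.
  exact: vl.
move=> Hv; have := congr1 (fun A : 'cV[K]_k.+1 => A ord_max 0) (Avk k).
by rewrite Hv mulmx0 !mxE /= eqxx => /eqP; rewrite eq_sym oner_eq0.
Qed.

End Constr.


Theorem lemma3p4 (K : fieldType) (E : lmodType K) (u : nat -> E)
    (f : nat -> E -> K)
    (hf : forall n : nat, linear_functional (f n))
    (hu : hamel_basis u)
    (hind : lin_indep_functionals f)
    (hsep : separates_points f) :
  exists alpha beta : nat -> nat,
    bijective alpha /\ bijective beta /\
    (forall n : nat,
        (\matrix_(j < n, k < n) f (alpha j) (u (beta k))) \in unitmx) /\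
    exists c : nat -> nat -> K,
      (forall j : nat, c j j != 0) /\
      (forall j : nat,
          f (alpha j) (\sum_(m < j.+1) c m j *: u (beta m)) = 1) /\
      (forall j k : nat, (j < k)%N ->
          f (alpha j) (\sum_(m < k.+1) c m k *: u (beta m)) = 0).
Proof.
exists (alpha K E u f), (beta K E u f).
split; first exact: (alpha_bij K E u f hf hu hind hsep).
split; first exact: (beta_bij K E u f hf hu hind hsep).
split.
  move=> n; have [_ _ _ _ HM] := inv_state K E u f hf hu hind hsep n.
  suff -> : (\matrix_(j < n, k < n) f (alpha K E u f j) (u (beta K E u f k))) =
            Mat K E u f (state K E u f n).1 (state K E u f n).2 n by [].
  by apply/matrixP => j k; rewrite (MatS K E u f hf hu hind hsep) mxE.
exists (cc K E u f); split; first exact: (ckk K E u f hf hu hind hsep).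
split.
  by move=> j; rewrite (key K E u f hf hu hind hsep j j (leqnn j)) eqxx.
by move=> j k Hjk; rewrite (key K E u f hf hu hind hsep k j (ltnW Hjk)) ltn_eqF.
Qed.
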